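(* In the setting below, for all $n\in\mathbb{N}_0$, $$d(t_{2n+2})\le\frac{e^{K(t_{2n+2}-t_{2n+1})}}{2-e^{K(t_{2n+2}-t_{2n+1})}}\,d(t_{2n+1}).$$
   Context: Setting: $N\ge2$; $\psi:\mathbb{R}^d\times\mathbb{R}^d\to\mathbb{R}$ positive, bounded, continuous, $K:=\|\psi\|_\infty$; $\{t_n\}_{n\in\mathbb{N}_0}$ increasing, nonnegative, $t_0=0$, $t_n\to\infty$; $\alpha(0)=1$, $\alpha=1$ on $(t_{2n},t_{2n+1})$, $\alpha=-1$ on $[t_{2n+1},t_{2n+2}]$; $\{x_i\}$ solves $x_i'(t)=\frac1{N-1}\sum_{j\ne i}\alpha(t)\psi(x_i(t),x_j(t))(x_j(t)-x_i(t))$, $t>0$, $x_i(0)=x_i^0\in\mathbb{R}^d$ (continuous, $C^1$ on each $(t_n,t_{n+1})$). $d(t):=\max_{i,j}|x_i(t)-x_j(t)|$. Standing assumptions: $t_{2n+2}-t_{2n+1}<\frac{\ln 2}{K}$ for all $n$; $\sum_{p\ge0}\ln\frac{e^{K(t_{2p+2}-t_{2p+1})}}{2-e^{K(t_{2p+2}-t_{2p+1})}}<\infty$; $\sum_{p\ge0}\ln\max\{1-e^{-K(t_{2p+1}-t_{2p})},1-\frac{\psi_0}{K}(1-e^{-K(t_{2p+1}-t_{2p})})\}=-\infty$, with $\psi_0=\min_{|y|,|z|\le M^0}\psi(y,z)$, $M^0=e^{K\sum_{p}(t_{2p+2}-t_{2p+1})}\max_i|x_i^0|$. *)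

(* Defs.v *)
(* R : realType, R^d rendered as row vectors 'rV[R]_d
   equipped (explicitly) with the Euclidean norm. *)
From HB Require Import structures.
From mathcomp Require Import all_boot all_order all_algebra.
From mathcomp Require Import all_classical all_reals all_analysis.
Set Implicit Arguments. Unset Strict Implicit. Unset Printing Implicit Defensive.
Import Order.TTheory GRing.Theory Num.Theory.
Import numFieldNormedType.Exports.
Local Open Scope classical_set_scope.
Local Open Scope ring_scope.

Definition enorm (R : realType) (d : nat) (v : 'rV[R]_d) : R :=
  Num.sqrt (\sum_(k < d) v ord0 k ^+ 2).

(* K := ||psi||_oo (psi is positive, so this is the supremum of its values) *)
Definition supnorm (R : realType) (d : nat) (psi : 'rV[R]_d -> 'rV[R]_d -> R) : R :=
  sup [set psi p.1 p.2 | p in [set: 'rV[R]_d * 'rV[R]_d]].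

Definition alpha (R : realType) (tn : nat -> R) (t : R) : R :=
  if `[< exists n, tn (2 * n + 1)%N <= t <= tn (2 * n + 2)%N >] then -1 else 1.

Definition diam (R : realType) (N d : nat) (x : 'I_N -> R -> 'rV[R]_d) (t : R) : R :=
  \big[Num.max/0]_(i < N) \big[Num.max/0]_(j < N) enorm (x i t - x j t).

Definition tau (R : realType) (tn : nat -> R) (p : nat) : R :=
  tn (2 * p + 2)%N - tn (2 * p + 1)%N.

Definition sigma (R : realType) (tn : nat -> R) (p : nat) : R :=
  tn (2 * p + 1)%N - tn (2 * p)%N.

Definition M0 (R : realType) (N d : nat) (K : R) (tn : nat -> R) (x0 : 'I_N -> 'rV[R]_d) : R :=
  expR (K * limn (series (tau tn))) * \big[Num.max/0]_(i < N) enorm (x0 i).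

(* psi_0 = min_{|y|,|z| <= M^0} psi(y,z) (a minimum by compactness) *)
Definition psi0 (R : realType) (d : nat) (psi : 'rV[R]_d -> 'rV[R]_d -> R) (M : R) : R :=
  inf [set psi p.1 p.2 | p in [set p : 'rV[R]_d * 'rV[R]_d | enorm p.1 <= M /\ enorm p.2 <= M]].

(* Main.v *)
Require Import Defs.
From HB Require Import structures.
From mathcomp Require Import all_boot all_order all_algebra.
From mathcomp Require Import all_classical all_reals all_analysis.
From mathcomp Require Import ring lra.
Set Implicit Arguments. Unset Strict Implicit. Unset Printing Implicit Defensive.
Import Order.TTheory GRing.Theory Num.Theory.
Import numFieldNormedType.Exports.
Local Open Scope classical_set_scope.
Local Open Scope ring_scope.
Section Inner.
Variables (R : realType) (d : nat).
Implicit Types u w : 'rV[R]_d.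

Definition inner u w : R := \sum_(k < d) u ord0 k * w ord0 k.

Lemma enorm_ge0 u : 0 <= enorm u.
Proof. exact: sqrtr_ge0. Qed.

Lemma enorm_sq u : enorm u ^+ 2 = inner u u.
Proof.
rewrite /enorm sqr_sqrtr; last by apply: sumr_ge0 => k _; exact: sqr_ge0.
by apply: eq_bigr => k _; rewrite expr2.
Qed.

Lemma CS_sq u w : inner u w ^+ 2 <= inner u u * inner w w.
Proof.
set A := inner u u; set B := inner w w; set C := inner u w.
have H : 0 <= \sum_(k < d) \sum_(l < d)
   (u ord0 k * w ord0 l - u ord0 l * w ord0 k) ^+ 2.
  by apply: sumr_ge0 => k _; apply: sumr_ge0 => l _; exact: sqr_ge0.
have E : \sum_(k < d) \sum_(l < d)
   (u ord0 k * w ord0 l - u ord0 l * w ord0 k) ^+ 2 = (A * B - C ^+ 2) *+ 2.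
  have E1 : forall k l : 'I_d, (u ord0 k * w ord0 l - u ord0 l * w ord0 k) ^+ 2 =
     (u ord0 k * u ord0 k) * (w ord0 l * w ord0 l)
     + (u ord0 l * u ord0 l) * (w ord0 k * w ord0 k)
     - ((u ord0 k * w ord0 k) * (u ord0 l * w ord0 l)) *+ 2.
    by move=> k l; ring.
  under eq_bigr do under eq_bigr do rewrite E1.
  under eq_bigr do rewrite sumrB big_split /= -!mulr_sumr.
  under eq_bigr do rewrite -mulr_suml sumrMnl -mulr_sumr.
  rewrite sumrB big_split /= -!mulr_suml.
  rewrite -mulr_sumr sumrMnl -mulr_suml.
  rewrite -/(inner u u) -/(inner w w) -/(inner u w) -/A -/B -/C.
  rewrite expr2; ring.

rewrite E mulr2n in H; rewrite -subr_ge0; lra.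
Qed.

Lemma CS u w : `|inner u w| <= enorm u * enorm w.
Proof.
rewrite -sqrtr_sqr.
have -> : enorm u * enorm w = Num.sqrt ((enorm u * enorm w) ^+ 2).
  by rewrite sqrtr_sqr ger0_norm // mulr_ge0 // enorm_ge0.
rewrite ler_sqrt; last exact: sqr_ge0.
by rewrite exprMn !enorm_sq; exact: CS_sq.
Qed.

Lemma innerB u v w : inner (u - v) w = inner u w - inner v w.
Proof. rewrite /inner -sumrB; apply: eq_bigr => k _; rewrite !mxE; ring. Qed.

Lemma innerZ (a : R) u w : inner (a *: u) w = a * inner u w.
Proof. rewrite /inner mulr_sumr; apply: eq_bigr => k _; rewrite !mxE; ring. Qed.

Lemma inner_sum (I : Type) (r : seq I) (P : pred I) (F : I -> 'rV[R]_d) w :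
  inner (\sum_(l <- r | P l) F l) w = \sum_(l <- r | P l) inner (F l) w.
Proof.
rewrite /inner; under eq_bigr do rewrite summxE mulr_suml.
by rewrite exchange_big.
Qed.
End Inner.

Section Cont.
Variables (R : realType) (d : nat).

Lemma cont_coord (f : R -> 'rV[R]_d) t k :
  {for t, continuous f} -> {for t, continuous (fun s => f s ord0 k)}.
Proof. by move=> Hf; exact: (continuous_comp Hf (@coord_continuous R 1 d ord0 k (f t))). Qed.

Lemma cont_enorm (f : R -> 'rV[R]_d) t :
  {for t, continuous f} -> {for t, continuous (fun s => enorm (f s))}.
Proof.
move=> Hf.
have Hs : {for t, continuous (fun s => \sum_(k < d) f s ord0 k ^+ 2)}.
  apply: cvg_big => //; first exact: add_continuous.
  move=> k _; have := continuous_comp (cont_coord (k:=k) Hf) (@exprn_continuous R 2 _); exact.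
exact: (continuous_comp Hs (@sqrt_continuous R _)).
Qed.

Lemma cont_diam (N : nat) (x : 'I_N -> R -> 'rV[R]_d) t :
  (forall i, {for t, continuous (x i)}) -> {for t, continuous (diam x)}.
Proof.
move=> Hx; rewrite /diam.
apply: cvg_big => //; first exact: max_continuous.
move=> i _; apply: cvg_big => //; first exact: max_continuous.
move=> j _; apply: (cont_enorm (f := fun s => x i s - x j s)).
exact: continuousB.
Qed.
End Cont.

Section Der.
Variables (R : realType) (d : nat).

Lemma deriv_inner (f : R -> 'rV[R]_d) (w : 'rV[R]_d) t :
  derivable f t 1 ->
  is_derive t 1 (fun s => inner (f s) w) (inner ('D_1 f t) w).
Proof.
move=> Hd.
have Hk : forall k : 'I_d, is_derive t 1 (fun s => f s ord0 k * w ord0 k)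
   ('D_1 f t ord0 k * w ord0 k).
  move=> k.
  have /derivableP Hk := (derivable_mxP f t 1).1 Hd ord0 k.
  have := is_deriveZ (w ord0 k) Hk.
  rewrite (derive_mx Hd) mxE.
  have -> : (w ord0 k \*: (fun x => f x ord0 k)) = (fun s => f s ord0 k * w ord0 k).
    by apply/funext => s /=; rewrite mulrC.
  by move=> H; apply: is_derive_eq H _; rewrite mulrC.
have := is_derive_sum Hk.
by rewrite fct_sumE.
Qed.
End Der.

Section More.
Variables (R : realType) (d : nat).

Lemma gder (c a C t : R) : is_derive t 1 (fun s => C * expR (c * (s - a))) (C * (expR (c * (t - a)) * c)).
Proof.
have H1 : is_derive t 1 (fun s : R => c * (s - a)) c.
  have := is_deriveZ c (is_deriveB (@is_derive_id _ _ t 1) (is_derive_cst a t 1)).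
  rewrite subr0 /= => H; by apply: is_derive_eq H _; exact: mulr1.
have H2 := @is_derive1_comp R expR (fun s => c * (s - a)) t _ _ (is_derive_expR (c * (t - a))) H1.
have := is_deriveZ C H2.
done.
Qed.

Lemma gcont (c a C t : R) : {for t, continuous (fun s => C * expR (c * (s - a)))}.
Proof.
have [H _] := gder c a C t.
exact/differentiable_continuous/derivable1_diffP.
Qed.

Lemma diam_ge0 N (x : 'I_N -> R -> 'rV[R]_d) t : 0 <= diam x t.
Proof.
rewrite /diam; elim/big_ind: _ => //; first by move=> u v hu hv; rewrite le_max hu.
move=> i _; elim/big_ind: _ => //; first by move=> u v hu hv; rewrite le_max hu.
move=> j _; exact: enorm_ge0.
Qed.

Lemma enorm_le_diam N (x : 'I_N -> R -> 'rV[R]_d) t i j :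
  enorm (x i t - x j t) <= diam x t.
Proof.
rewrite /diam; apply: (le_trans _ (le_bigmax _ _ i)) => /=.
exact: (le_bigmax _ (fun j => enorm (x i t - x j t)) j).
Qed.

Lemma cont_pos (f : R -> 'rV[R]_d) :
  {within [set t | 0 <= t], continuous f} -> forall t, 0 < t -> {for t, continuous f}.
Proof.
move=> Hf t t0.
have Hw : {within [set s : R | 0 < s], continuous f}.
  by apply: continuous_subspaceW Hf => s /= /ltW.
rewrite continuous_open_subspace in Hw; last exact: open_gt.
by apply: Hw; rewrite inE.
Qed.

Lemma cont_inner (f : R -> 'rV[R]_d) w t :
  {for t, continuous f} -> {for t, continuous (fun s => inner (f s) w)}.
Proof.
move=> Hf; apply: cvg_big => //; first exact: add_continuous.
move=> k _; apply: continuousM; first exact: (cont_coord (k:=k) Hf).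
exact: cvg_cst.
Qed.

Lemma alpha_norm (tn : nat -> R) t : `|alpha tn t| = 1.
Proof. by rewrite /alpha; case: ifP => _; rewrite ?normrN normr1. Qed.

Lemma ode_bound N (psi : 'rV[R]_d -> 'rV[R]_d -> R) (tn : nat -> R)
  (x : 'I_N -> R -> 'rV[R]_d) (K : R) i t w :
  (2 <= N)%N -> (forall y z, 0 < psi y z) -> (forall y z, psi y z <= K) ->
  'D_1 (x i) t = (N.-1%:R)^-1 *:
        \sum_(j < N | j != i)
           (alpha tn t * psi (x i t) (x j t)) *: (x j t - x i t) ->
  `|inner ('D_1 (x i) t) w| <= K * diam x t * enorm w.
Proof.
move=> HN Hp HK ->; rewrite innerZ inner_sum normrM.
set C := K * diam x t * enorm w.
have Hterm : forall j, `|inner ((alpha tn t * psi (x i t) (x j t)) *: (x j t - x i t)) w| <= C.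
  move=> j; rewrite innerZ normrM normrM alpha_norm mul1r.
  rewrite (ger0_norm (ltW (Hp _ _))) /C -mulrA.
  apply: ler_pM => //; first exact: ltW.
  apply: le_trans (CS _ _) _.
  by apply: ler_wpM2r; [exact: enorm_ge0 | exact: enorm_le_diam].
have HN1 : (0 < N.-1)%N by move: HN; case: (N) => [|[|n']].
apply: le_trans (ler_wpM2l (normr_ge0 _) (ler_norm_sum _ _ _)) _.
apply: le_trans (ler_wpM2l (normr_ge0 _) (ler_sum _ (fun j _ => Hterm j))) _.
rewrite (eq_bigl (fun j => j \in predC1 i)) // sumr_const cardC1 card_ord.
rewrite ger0_norm ?invr_ge0 //.
rewrite -[C *+ _]mulr_natr mulrCA mulVf ?mulr1 //.
by rewrite pnatr_eq0 -lt0n.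
Qed.
End More.

Unset Implicit Arguments.
Set Strict Implicit.
Theorem lemma3p12 (R : realType) (N d : nat)
  (psi : 'rV[R]_d -> 'rV[R]_d -> R) (tn : nat -> R)
  (x : 'I_N -> R -> 'rV[R]_d) :
  (2 <= N)%N ->
  (* psi positive, bounded, continuous *)
  (forall y z, 0 < psi y z) ->
  (exists B : R, forall y z, psi y z <= B) ->
  continuous (fun p : 'rV[R]_d * 'rV[R]_d => psi p.1 p.2) ->
  (* the switching times *)
  tn 0%N = 0 ->
  (forall n, tn n < tn n.+1) ->
  tn @ \oo --> +oo ->
  (* x_i continuous on [0, oo), C^1 on each (t_n, t_{n+1}), solving the ODE there *)
  (forall i, {within [set t : R | 0 <= t], continuous (x i)}) ->
  (forall i n t, tn n < t < tn n.+1 ->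
     derivable (x i) t 1 /\
     {in [set s | tn n < s < tn n.+1], continuous ('D_1 (x i))} /\
     'D_1 (x i) t = (N.-1%:R)^-1 *:
        \sum_(j < N | j != i)
           (alpha tn t * psi (x i t) (x j t)) *: (x j t - x i t)) ->
  (* standing assumptions *)
  (forall n, tau tn n < ln 2 / supnorm psi) ->
  cvgn (series (fun p => ln (expR (supnorm psi * tau tn p)
                              / (2 - expR (supnorm psi * tau tn p))))) ->
  series (fun p => ln (Num.max (1 - expR (- (supnorm psi * sigma tn p)))
          (1 - psi0 psi (M0 (supnorm psi) tn (fun i => x i 0)) / supnorm psi
                 * (1 - expR (- (supnorm psi * sigma tn p))))))
     @ \oo --> -oo ->
  (* conclusion *)
  forall n : nat,
    diam x (tn (2 * n + 2)%N) <=
      expR (supnorm psi * tau tn n) / (2 - expR (supnorm psi * tau tn n))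
      * diam x (tn (2 * n + 1)%N).
Proof.
move=> HN Hpos [B HB] _ H0 Hinc _ Hxc Hode Htau _ _ n.
set K := supnorm psi.
have HK : forall y z, psi y z <= K.
  move=> y z; rewrite /K /supnorm; apply: sup_upper_bound; last by exists (y, z).
  split; first by exists (psi 0 0), (0, 0).
  by exists B => _ [p _ <-]; exact: HB.
have K0 : 0 < K := lt_le_trans (Hpos 0 0) (HK 0 0).
have tn_ge0 : forall m, 0 <= tn m.
  by elim => [|m IH]; [rewrite H0 | exact: le_trans IH (ltW (Hinc m))].
set m := (2 * n + 1)%N.
have Hm2 : (2 * n + 2)%N = m.+1 by rewrite /m addnS.
rewrite /tau Hm2 -/m.
set a := tn m; set b := tn m.+1.
have a0 : 0 < a by rewrite /a /m addn1; exact: le_lt_trans (tn_ge0 _) (Hinc _).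
have ab : a < b := Hinc m.
have Hxt : forall i t, 0 < t -> {for t, continuous (x i)}.
  by move=> i t t0; exact: cont_pos (Hxc i) t t0.
set c := K * 2.
have Hmain : diam x b <= expR (c * (b - a)) * diam x a.
  rewrite leNgt; apply/negP => Hlt.
  set Da := diam x a; set Db := diam x b.
  set E := expR (c * (b - a)).
  have E0 : 0 < E := expR_gt0 _.
  have Da0 : 0 <= Da := diam_ge0 x a.
  set eps := (Db - E * Da) / E.
  have eps0 : 0 < eps by rewrite divr_gt0 // subr_gt0.
  pose g s := (Da + eps) * expR (c * (s - a)).
  have gb : g b = Db by rewrite /g -/E /eps; field; rewrite gt_eqF.
  clearbody eps.
  have g0 : forall s, 0 < g s by move=> s; apply: mulr_gt0; [lra | exact: expR_gt0].
  pose S := [set s | a <= s <= b /\ g s <= diam x s].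
  have Sb : S b by split; [rewrite lexx ltW | rewrite gb].
  have Slb : lbound S a by move=> s [/andP[]].
  have hlb : has_lbound S by exists a.
  have hinf : has_inf S by split; [exists b | exact: hlb].
  set s0 := inf S.
  have as0 : a <= s0 := lb_le_inf (ex_intro _ b Sb) Slb.
  have s0b : s0 <= b := ge_inf hlb Sb.
  have Hbefore : forall t, a <= t -> t < s0 -> diam x t < g t.
    move=> t at0 ts; rewrite ltNge; apply/negP => Hgt.
    have St : S t by split => //; rewrite at0 /= (ltW (lt_le_trans ts s0b)).
    by move: (ge_inf hlb St); rewrite leNgt ts.
  have s0pos : 0 < s0 := lt_le_trans a0 as0.
  have Hcd : {for s0, continuous (fun s => g s - diam x s)}.
    apply: continuousB; first exact: gcont.
    by apply: cont_diam => i; apply: Hxt.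
  have Hat : g s0 <= diam x s0.
    rewrite leNgt; apply/negP => Hlt2.
    have : \forall t \near s0, 0 < g t - diam x t.
      by apply: (cvgr_gt (g s0 - diam x s0) Hcd); rewrite subr_gt0.
    move=> /nbhs_ballP [e e0 He].
    have [t St ht] := inf_adherent e0 hinf.
    have ts0 : s0 <= t := ge_inf hlb St.
    have := He t; rewrite /ball /= distrC ger0_norm ?subr_ge0 //.
    move=> /(_ _) H; have := H ltac:(lra).
    case: St => _ H2; lra.
  have as0' : a < s0.
    rewrite lt_neqAle as0 andbT; apply/eqP => Ha.
    by move: Hat; rewrite -Ha /g subrr mulr0 expR0 mulr1 -/Da gerDl leNgt eps0.
  have [i [j Hij]] : exists i j, g s0 <= enorm (x i s0 - x j s0).
    apply: contrapT => Hno.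
    have : diam x s0 < g s0.
      rewrite /diam; apply: bigmax_lt => // i _; apply: bigmax_lt => // j _.
      rewrite ltNge; apply/negP => H; apply: Hno; by exists i, j.
    by rewrite ltNge Hat.
  set w := x i s0 - x j s0; set r := enorm w.
  have r0 : 0 < r := lt_le_trans (g0 s0) Hij.
  pose h s := inner (x i s) w - inner (x j s) w - r * g s.
  have Hmono : h s0 <= h a.
    have Hint : forall t, t \in `]a, s0[ -> tn m < t < tn m.+1.
      move=> t; rewrite in_itv /= => /andP[at0 ts].
      by rewrite -/a -/b at0 /= (lt_le_trans ts s0b).
    have Hder : forall t, t \in `]a, s0[ -> is_derive t 1 h
       (inner ('D_1 (x i) t) w - inner ('D_1 (x j) t) w
          - r * ((Da + eps) * (expR (c * (t - a)) * c))).
      move=> t /Hint Ht.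
      have [Hdi _] := Hode i m t Ht; have [Hdj _] := Hode j m t Ht.
      have := is_deriveB (is_deriveB (deriv_inner w Hdi) (deriv_inner w Hdj))
         (is_deriveZ r (gder c a (Da + eps) t)).
      exact.
    have Hd : forall t, t \in `]a, s0[ -> derivable h t 1.
      by move=> t /Hder [].
    have Hle : forall t, t \in `]a, s0[ -> (h^`())%classic t <= 0.
      move=> t Ht; have Ht' := Ht; move: Ht'; rewrite in_itv /= => /andP[at0 ts].
      rewrite derive1E; case: (Hder t Ht) => _ ->.
      have Bi := ode_bound w HN Hpos HK (Hode i m t (Hint t Ht)).2.2.
      have Bj := ode_bound w HN Hpos HK (Hode j m t (Hint t Ht)).2.2.
      have Hb := Hbefore t (ltW at0) ts; rewrite /g in Hb.
      have Hp : 0 <= K * r * ((Da + eps) * expR (c * (t - a)) - diam x t).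
        by apply: mulr_ge0; [apply: mulr_ge0; exact: ltW | rewrite subr_ge0 ltW].
      have := ler_norm (inner ('D_1 (x i) t) w).
      have := ler_norm (- inner ('D_1 (x j) t) w); rewrite normrN.
      rewrite -/r in Bi Bj.
      move=> Hj Hi.
      move: Hp Bi Bj Hj Hi.
      rewrite /c.
      set X := expR _; set Ii := inner _ w; set Ij := inner _ w; set Dt := diam x t.
      move=> Hp Bi Bj Hj Hi.
      lra.
    have Hc : {within `[a, s0], continuous h}.
      apply: continuous_in_subspaceT => t; rewrite inE /= in_itv /= => /andP[at0 _].
      have tpos : 0 < t := lt_le_trans a0 at0.
      have := continuousB (continuousB (cont_inner (w:=w) (Hxt i t tpos)) (cont_inner (w:=w) (Hxt j t tpos)))
        (@continuousZl_tmp _ _ _ _ r _ (gcont (c:=c) (a:=a) (C:=Da + eps) (t:=t))).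
      exact.
    apply: (ler0_derive1_le_cc Hd Hle Hc) => //; rewrite in_itv /= ?lexx ?as0 //.
  have ha : h a < 0.
    have H1 : inner (x i a) w - inner (x j a) w <= Da * r.
      rewrite -innerB; apply: le_trans (ler_norm _) _; apply: le_trans (CS _ _) _.
      by apply: ler_wpM2r; [exact: enorm_ge0 | exact: enorm_le_diam].
    have : g a = Da + eps by rewrite /g subrr mulr0 expR0 mulr1.
    rewrite /h => ->; nra.
  have hs0 : 0 <= h s0.
    rewrite /h -innerB -/w -enorm_sq -/r.
    have : 0 <= r * (r - g s0) by apply: mulr_ge0; [exact: ltW | rewrite subr_ge0].
    rewrite expr2; lra.
  lra.
have Ht := Htau n; rewrite /tau Hm2 -/m -/a -/b -/K in Ht.
set E := expR (K * (b - a)).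
have E1 : 1 <= E by rewrite /E -expR0 ler_expR; apply: mulr_ge0; [exact: ltW | rewrite subr_ge0 ltW].
have E2 : E < 2.
  rewrite /E -[X in _ < X](@lnK R 2) ?posrE // ltr_expR.
  by rewrite -ltr_pdivlMl // mulrC.
have Da0 := diam_ge0 x a.
have EE : expR (c * (b - a)) = E * E by rewrite /E -expRD /c; congr expR; ring.
rewrite EE in Hmain; apply: le_trans Hmain _.
apply: ler_wpM2r => //.
rewrite ler_pdivlMr ?subr_gt0 //.
have H1 : 0 <= E * (E - 1) ^+ 2 by apply: mulr_ge0; [lra | exact: sqr_ge0].
rewrite expr2 in H1; nra.
Qed.
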